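(* Let $X$ be an infinite-dimensional complex Banach space, $T \in \mathcal{B}(X)$, and $N \in \mathcal{B}(X)$ a nilpotent operator commuting with $T$. Then $\Pi_{a}(T+N)=\Pi_{a}(T)$.
   Context: $\mathcal{B}(X)$ is the algebra of bounded linear operators on $X$. $\sigma_a(T)$ is the approximate point spectrum of $T$. For $A\in\mathcal{B}(X)$, $asc(A)=\inf\{n\in\mathbb{N}:\mathcal{N}(A^n)=\mathcal{N}(A^{n+1})\}$ (infimum of empty set is $\infty$); $A$ is left Drazin invertible if $asc(A)<\infty$ and $\mathcal{R}(A^{asc(A)+1})$ is closed. A left pole of $T$ is a $\lambda\in\sigma_a(T)$ such that $T-\lambda I$ is left Drazin invertible; $\Pi_a(T)$ is the set of left poles of $T$. *)

(* Defs.v *)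
From HB Require Import structures.
From mathcomp Require Import all_boot all_order all_algebra.
From mathcomp Require Import complex.
From mathcomp Require Import all_classical all_reals all_analysis.
Set Implicit Arguments. Unset Strict Implicit. Unset Printing Implicit Defensive.
Import Order.TTheory GRing.Theory Num.Theory.
Import numFieldNormedType.Exports.
Local Open Scope classical_set_scope.
Local Open Scope ring_scope.

Section Defs.
Variable (R : realType).
Local Notation C := (R[i])%C.
Variable (V : completeNormedModType C).

Definition bounded_op (A : V -> V) : Prop :=
  (forall (a : C) (x y : V), A (a *: x + y) = a *: A x + A y) /\ continuous A.

Definition infinite_dim : Prop :=
  forall s : seq V, exists x : V,
    ~ exists c : 'I_(size s) -> C, x = \sum_(i < size s) c i *: s`_i.

Definition opow (A : V -> V) (n : nat) : V -> V := iter n A.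

Definition kernel (A : V -> V) : set V := [set x | A x = 0].

Definition is_asc (A : V -> V) (p : nat) : Prop :=
  kernel (opow A p) = kernel (opow A p.+1) /\
  forall m, (m < p)%N -> kernel (opow A m) <> kernel (opow A m.+1).

Definition left_drazin_invertible (A : V -> V) : Prop :=
  exists p, is_asc A p /\ closed (range (opow A p.+1)).

Definition shift (T : V -> V) (l : C) : V -> V := fun x => T x - l *: x.

Definition approx_spectrum (T : V -> V) : set C :=
  [set l | ~ exists c : R, (0 < c)%R /\ forall x : V,
       ((c%:C)%C * `|x| <= `|shift T l x|)%R ].

Definition left_poles (T : V -> V) : set C :=
  [set l | approx_spectrum T l /\ left_drazin_invertible (shift T l)].

Definition nilpotent (A : V -> V) : Prop := exists k, forall x, opow A k x = 0.

End Defs.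

(* Main.v *)
Require Import Defs.
From HB Require Import structures.
From mathcomp Require Import all_boot all_order all_algebra.
From mathcomp Require Import complex.
From mathcomp Require Import all_classical all_reals all_analysis.
Import Order.TTheory GRing.Theory Num.Theory.
Import numFieldNormedType.Exports.
Local Open Scope classical_set_scope.
Local Open Scope ring_scope.
From mathcomp Require Import ring.
Section Aux.
Variable R : realType.
Local Notation C := (R[i])%C.

Lemma posC (e : C) : 0 < e -> e = ((complex.Re e)%:C)%C /\ 0 < complex.Re e.
Proof.
case: e => a b; rewrite ltcE /= => /andP[/eqP -> ha]; split => //.
Qed.

Lemma natC (n : nat) : (n%:R : C) = ((n%:R : R)%:C)%C.
Proof.
elim: n => [//|n IH]; rewrite -addn1 !natrD IH.
by rewrite rmorphD rmorph1.
Qed.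

Lemma archC (e : C) : 0 < e -> exists n : nat, e < n%:R.
Proof.
move=> /posC[-> he]; exists (Num.Def.trunc (complex.Re e)).+1.
rewrite natC ltcR; exact: truncnS_gt.
Qed.

Lemma geoC (e B : C) : 0 < e -> 0 <= B -> exists n : nat, B * (2^-1) ^+ n < e.
Proof.
move=> e0 B0; have [n hn] := @archC ((B + 1) / e) (divr_gt0 (ltr_wpDl B0 ltr01) e0).
exists n.
have h2 : (0 : C) < 2 ^+ n by rewrite exprn_gt0.
rewrite exprVn -ltr_pdivlMr // invrK.
apply: (lt_le_trans (y := B + 1)); first by rewrite ltrDl ltr01.
rewrite mulrC -ler_pdivrMr // (le_trans (ltW hn)) // -natrX ler_nat.
exact: ltnW (ltn_expl _ _).
Qed.
End Aux.
Arguments posC {R} [e].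
Arguments archC {R} [e].
Arguments geoC {R} [e B].

Section Gen.
Variable R : realType.
Local Notation C := (R[i])%C.
Variable V : completeNormedModType C.

Lemma geo_lim (u : nat -> V) (r : nat -> C) :
  (forall n, r n.+1 <= r n / 2) -> (forall n, `|u n.+1 - u n| <= r n / 2) ->
  exists l, forall n, `|l - u n| <= r n.
Proof.
move=> hr hu.
have r0 n : 0 <= r n.
  by have := le_trans (normr_ge0 _) (hu n); rewrite pmulr_lge0 // invr_gt0 ltr0n.
have inv n d : `|u (n + d)%N - u n| <= r n - r (n + d)%N.
  elim: d => [|d IH]; first by rewrite addn0 !subrr normr0.
  rewrite addnS -(subrK (u (n + d)%N) (u (n + d).+1)) -addrA.
  apply: (le_trans (ler_normD _ _)).
  have := hr (n + d)%N; have := hu (n + d)%N.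
  move: (r (n+d)%N) (r (n + d).+1) IH => a b IH h1 h2.
  have : `|u (n + d).+1 - u (n + d)%N| + `|u (n + d)%N - u n| <= a / 2 + (r n - a).
    exact: lerD.
  move/le_trans; apply.
  apply: (le_trans _ (lerB (lexx (r n)) h2)).
  by rewrite le_eqVlt; apply/orP; left; apply/eqP; field.
have rgeo n : r n <= r 0%N * (2^-1) ^+ n.
  elim: n => [|n IH]; first by rewrite expr0 mulr1.
  rewrite (le_trans (hr n)) // exprSr mulrA ler_pM2r //.
have : cvg (u @ \oo).
  apply: cauchy_cvg; apply: cauchy_exP => e e0.
  have [n hn] := geoC e0 (r0 0%N).
  exists (u n); exists n => // m /= nm.
  rewrite -ball_normE /ball_ /=.
  rewrite -(subnKC nm) distrC; apply: (le_lt_trans (inv _ _)).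
  apply: (le_lt_trans _ (le_lt_trans (rgeo n) hn)).
  by rewrite lerBlDr lerDl.
move=> /cvg_ex [l Hl]; exists l => n.
apply/ler_addgt0Pr => e e0.
have := (cvgrPdist_lt _ _).1 Hl e e0.
move=> [N _ HN].
have := HN (maxn N n) (leq_maxl _ _).
move=> h; set m := maxn N n.
have hm : `|u m - u n| <= r n.
  have := inv n (m - n)%N; rewrite subnKC ?leq_maxr // => h'.
  by apply: le_trans h' _; rewrite lerBlDr lerDl r0.
have -> : l - u n = (l - u m) + (u m - u n) by rewrite addrA subrK.
apply: le_trans (ler_normD _ _) _; rewrite addrC; exact: lerD hm (ltW h).
Qed.
End Gen.
Section Main.
Variable R : realType.
Local Notation C := (R[i])%C.
Variable V : completeNormedModType C.

Definition islin (A : V -> V) := forall (a : C) (x y : V), A (a *: x + y) = a *: A x + A y.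

Definition lpack {A : V -> V} (hA : islin A) : {linear V -> V} :=
  HB.pack A (GRing.isLinear.Build _ _ _ _ A hA).

Lemma lin0 A : islin A -> A 0 = 0.
Proof. by move=> hA; exact: (linear0 (lpack hA)). Qed.
Lemma linD A : islin A -> forall x y, A (x + y) = A x + A y.
Proof. by move=> hA; exact: (linearD (lpack hA)). Qed.
Lemma linB A : islin A -> forall x y, A (x - y) = A x - A y.
Proof. by move=> hA; exact: (linearB (lpack hA)). Qed.
Lemma linN A : islin A -> forall x, A (- x) = - A x.
Proof. by move=> hA; exact: (linearN (lpack hA)). Qed.
Lemma linZ A : islin A -> forall (a : C) x, A (a *: x) = a *: A x.
Proof. by move=> hA a x; have := hA a x 0; rewrite addr0 lin0 // addr0. Qed.

Lemma linbound A : islin A -> continuous A ->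
  exists L : C, 0 < L /\ forall x, `|A x| <= L * `|x|.
Proof.
move=> hA cA.
have := continuous_linear_bounded 0 (f := lpack hA) (cA 0).
move=> /linear_boundedP /pinfty_ex_gt0 [r r0 Hr].
by exists r; split.
Qed.

Lemma geo_zero (z : V) (B : C) : (forall j, `|z| <= B * (2^-1) ^+ j) -> z = 0.
Proof.
move=> h; case: (eqVneq z 0) => // nz.
have zp : 0 < `|z| by rewrite normr_gt0.
have B0 : 0 <= B by have := h 0%N; rewrite expr0 mulr1; apply: le_trans.
have [j hj] := geoC zp B0.
by have := lt_le_trans hj (h j); rewrite ltxx.
Qed.

Lemma closed_mem (Y : set V) (l : V) : closed Y ->
  (forall e : C, 0 < e -> exists y, Y y /\ `|l - y| < e) -> Y l.
Proof.
move=> cY h; apply: cY => B /nbhs_ballP [e e0 hb].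
have [y [Yy hy]] := h e e0; exists y; split => //; apply: hb.
by rewrite -ball_normE /ball_ /=.
Qed.

Lemma closure_mem (Y : set V) (l : V) : closure Y l ->
  forall e : C, 0 < e -> exists y, Y y /\ `|l - y| < e.
Proof.
move=> cl e e0.
have : nbhs l (ball l e) by apply/nbhs_ballP; exists e.
move=> /cl [y [Yy hy]]; exists y; split => //.
by move: hy; rewrite -ball_normE /ball_ /=.
Qed.

Lemma harm_le {a b : C} : 0 < a -> 0 < b -> a * b / (a + b) <= a.
Proof.
move=> a0 b0; have ab : 0 < a + b by rewrite addr_gt0.
by rewrite -mulrA ger_pMr // ler_pdivrMr // mul1r lerDr ltW.
Qed.

Lemma baireY (Y : set V) (E : nat -> set V) (y00 : V) : closed Y -> Y y00 ->
  (forall n, closed (E n)) -> (forall y, Y y -> exists n, E n y) ->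
  exists n y0 (r : C), Y y0 /\ 0 < r /\ forall y, Y y -> `|y - y0| < r -> E n y.
Proof.
move=> cY Y00 cE cov; apply: contrapT => H.
have H' n y0 (r : C) : Y y0 -> 0 < r -> exists y, Y y /\ `|y - y0| < r /\ ~ E n y.
  move=> Yy0 r0; apply: contrapT => H2; apply: H; exists n, y0, r; split => //; split => //.
  move=> y Yy hy; apply: contrapT => nE; apply: H2; exists y; split => //.
have step : forall ns : nat * (V * C), exists s' : V * C,
    (Y ns.2.1 /\ 0 < ns.2.2) ->
    [/\ Y s'.1, 0 < s'.2, `|s'.1 - ns.2.1| <= ns.2.2 / 2, s'.2 <= ns.2.2 / 2 &
        forall z, `|z - s'.1| <= s'.2 -> ~ E ns.1 z].
  move=> [n [y0 r]] /=.
  case: (pselect (Y y0 /\ 0 < r)); last by move=> h; exists (y0, r) => /h.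
  move=> [Yy0 r0].
  have r20 : 0 < r / 2 by rewrite divr_gt0.
  have [y [Yy [hy nE]]] := H' n y0 (r / 2) Yy0 r20.
  have : nbhs y (~` E n) by apply: open_nbhs_nbhs; split => //; rewrite openC.
  move=> /nbhs_ballP [rho rho0 hb].
  have hr0 : 0 < rho * (r / 2) / (rho + r / 2) by rewrite divr_gt0 ?mulr_gt0 ?addr_gt0.
  exists (y, rho * (r / 2) / (rho + r / 2) / 2) => _; split => //=.
  - by rewrite divr_gt0.
  - exact: ltW.
  - rewrite ler_pM2r ?invr_gt0 // [rho * _]mulrC [rho + _]addrC.
    have hh := harm_le r20 (rho0 : 0 < rho); apply: le_trans hh _.
    by rewrite ler_pdivrMr // ler_peMr ?ltW // ltr1n.
  - move=> z hz; apply: (hb z); rewrite -ball_normE /ball_ /= distrC.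
    apply: (le_lt_trans hz).
    apply: (le_lt_trans (y := rho / 2)).
      by rewrite ler_pM2r ?invr_gt0 //; exact: harm_le.
    by rewrite gtr_pMr // invf_lt1 // ltr1n.
have [f Pf] := choice step.
pose fix s n := if n is m.+1 then f (m, s m) else (y00, 1 : C).
have sinv n : Y (s n).1 /\ 0 < (s n).2.
  elim: n => [|n [IH1 IH2]]; first by split => //=; exact: ltr01.
  by have [] := Pf (n, s n) (conj IH1 IH2).
have Ps n := Pf (n, s n) (sinv n).
have [l hl] := @geo_lim _ _ (fun n => (s n).1) (fun n => (s n).2)
  (fun n => let: And5 _ _ _ h _ := Ps n in h)
  (fun n => let: And5 _ _ h _ _ := Ps n in h).
have rb n : (s n).2 <= (2^-1) ^+ n.
  elim: n => [|n IH]; first by rewrite expr0.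
  have [_ _ _ h _] := Ps n; apply: (le_trans h).
  by rewrite exprSr ler_pM2r.
have Yl : Y l.
  apply: closed_mem cY _ => e e0.
  have [n hn] := geoC e0 (ler01 : (0 : C) <= 1).
  exists (s n).1; split; first exact: (sinv n).1.
  apply: le_lt_trans (hl n) _; apply: le_lt_trans (rb n) _.
  by rewrite mul1r in hn.
have [n En] := cov l Yl.
have [_ _ _ _ hz] := Ps n.
exact: hz l (hl n.+1) En.
Qed.

Lemma openmap (A : V -> V) : islin A -> continuous A -> closed (range A) ->
  exists D : C, 0 < D /\ forall x, exists x', A x' = A x /\ `|x'| <= D * `|A x|.
Proof.
move=> hA cA cY.
pose E (n : nat) := closure (A @` [set x | `|x| < n.+1%:R]).
have [n [y0 [r [Yy0 [r0 hE]]]]] : exists n y0 (r : C), range A y0 /\ 0 < r /\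
    forall y, range A y -> `|y - y0| < r -> E n y.
  apply: (@baireY _ _ 0) => //.
  - by exists 0 => //; rewrite lin0.
  - by move=> n; exact: closed_closure.
  move=> y [x _ <-].
  have [n hn] := @archC _ (`|x| + 1) (ltr_pwDr ltr01 (normr_ge0 _)).
  exists n; apply: subset_closure; exists x => //=.
  apply: lt_trans (ltr_pwDr ltr01 (lexx _)) _; apply: lt_le_trans hn _.
  by rewrite ler_nat.
have st2 y : range A y -> `|y| < r -> forall e : C, 0 < e ->
    exists x, `|x| < (n.+1%:R + n.+1%:R) /\ `|A x - y| < e.
  move=> [a _ <-] hy e e0.
  have [b _ yb] := Yy0.
  have e20 : 0 < e / 2 by rewrite divr_gt0.
  have h1 : E n (y0 + A a).
    apply: hE; first by exists (b + a) => //; rewrite linD // yb.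
    by rewrite addrAC subrr add0r.
  have h2 : E n y0 by apply: hE => //; rewrite subrr normr0.
  have [z1 [[x1 hx1 <-] hz1]] := closure_mem _ _ h1 _ e20.
  have [z2 [[x2 hx2 <-] hz2]] := closure_mem _ _ h2 _ e20.
  exists (x1 - x2); split.
    apply: le_lt_trans (ler_normB _ _) _; exact: ltrD.
  have -> : A (x1 - x2) - A a = - ((y0 + A a) - A x1) + (y0 - A x2).
    rewrite linB // opprB opprD !addrA.
    by rewrite (addrAC (A x1) (- y0) (- A a)) subrK addrAC.
  apply: le_lt_trans (ler_normD _ _) _; rewrite normrN.
  by rewrite [e]splitr; exact: ltrD.
set K : C := n.+1%:R + n.+1%:R.
have K0 : 0 < K by rewrite addr_gt0 // ltr0n.
set D0 : C := K * 2 / r.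
have D00 : 0 < D0 by rewrite divr_gt0 // mulr_gt0.
have st3 y : range A y -> forall e : C, 0 < e ->
    exists x, `|x| <= D0 * `|y| /\ `|A x - y| < e.
  move=> [a _ <-] e e0.
  case: (eqVneq (A a) 0) => [->|ny].
    by exists 0; rewrite (lin0 _ hA) subr0 !normr0 mulr0; split.
  have nyp : 0 < `|A a| by rewrite normr_gt0.
  set t : C := r / (2 * `|A a|).
  have t0 : 0 < t by rewrite divr_gt0 // mulr_gt0.
  have ht : `|t *: A a| < r.
    rewrite normrZ gtr0_norm // /t invfM -!mulrA mulVf ?mulr1; last by rewrite gt_eqF.
    by rewrite gtr_pMr // invf_lt1 // ltr1n.
  have [x' [hx' hax']] := st2 (t *: A a) (ex_intro2 _ _ (t *: a) I (linZ _ hA _ _))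
     ht (t * e) (mulr_gt0 t0 e0).
  exists (t^-1 *: x'); split.
    rewrite normrZ gtr0_norm ?invr_gt0 //.
    apply: le_trans (ler_wpM2l _ (ltW hx')) _; first by rewrite invr_ge0 ltW.
    rewrite /D0 /t /K le_eqVlt; apply/orP; left; apply/eqP; field.
    by rewrite gt_eqF ?gt_eqF.
  have -> : A (t^-1 *: x') - A a = t^-1 *: (A x' - t *: A a).
    by rewrite (linZ _ hA) scalerBr scalerA mulVf ?scale1r // gt_eqF.
  rewrite normrZ gtr0_norm ?invr_gt0 //.
  by rewrite -ltr_pdivlMl ?invr_gt0 // invrK.
have [L [L0 hL]] := linbound _ hA cA.
exists (2 * D0); split; first by rewrite mulr_gt0.
move=> x0; set y := A x0.
case: (eqVneq y 0) => [y0'|ny].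
  by exists 0; rewrite (lin0 _ hA) y0' normr0 mulr0; split.
have nyp : 0 < `|y| by rewrite normr_gt0.
have gex : forall zj : V * nat, exists x, range A zj.1 ->
    `|x| <= D0 * `|zj.1| /\ `|A x - zj.1| < `|y| * (2^-1) ^+ zj.2.+1.
  move=> [z j] /=; case: (pselect (range A z)) => hz; last by exists 0.
  have h2 : (0 : C) < 2^-1 by rewrite invr_gt0 ltr0n.
  have [x hx] := st3 z hz (`|y| * (2^-1) ^+ j.+1) (mulr_gt0 nyp (exprn_gt0 _ h2)).
  by exists x.
have [g Pg] := choice gex.
pose fix w j := if j is k.+1 then w k + g (y - A (w k), k) else 0.
have rg v : range A (y - A v) by exists (x0 - v) => //; rewrite (linB _ hA).
have winv j : `|y - A (w j)| <= `|y| * (2^-1) ^+ j.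
  elim: j => [|j IH] /=; first by rewrite (lin0 _ hA) subr0 expr0 mulr1.
  have [_ h2] := Pg (y - A (w j), j) (rg _).
  have -> : y - A (w j + g (y - A (w j), j)) = - (A (g (y - A (w j), j)) - (y - A (w j))).
    by rewrite (linD _ hA) opprD addrA opprB.
  by rewrite normrN; apply: ltW.
pose rr j := (2 * D0 * `|y|) * (2^-1) ^+ j.
have hr1 : forall j, rr j.+1 <= rr j / 2.
  by move=> j; rewrite /rr exprSr mulrA.
have hr2 : forall j, `|w j.+1 - w j| <= rr j / 2.
  move=> j /=; rewrite addrAC subrr add0r.
  have [h1 _] := Pg (y - A (w j), j) (rg _).
  apply: (le_trans h1); apply: le_trans (ler_wpM2l (ltW D00) (winv j)) _.
  by rewrite /rr le_eqVlt; apply/orP; left; apply/eqP; field.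
have [l hl] := @geo_lim _ _ w rr hr1 hr2.
exists l; split.
  apply/eqP; rewrite -subr_eq0; apply/eqP.
  apply: (@geo_zero _ (L * (2 * D0 * `|y|) + `|y|)) => j.
  have -> : A l - y = A (l - w j) - (y - A (w j)).
    by rewrite (linB _ hA) opprB addrA subrK.
  apply: le_trans (ler_normB _ _) _.
  rewrite mulrDl; apply: lerD (winv j).
  apply: le_trans (hL _) _; by rewrite -mulrA ler_pM2l //; have := hl j; rewrite /rr.
by have := hl 0%N; rewrite /= subr0 /rr expr0 mulr1.
Qed.
Lemma opowS (A : V -> V) n x : opow A n.+1 x = A (opow A n x).
Proof. by []. Qed.

Lemma opow_comm (A B : V -> V) : (forall x, A (B x) = B (A x)) ->
  forall n x, opow A n (B x) = B (opow A n x).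
Proof. by move=> h; elim=> [//|n IH] x; rewrite !opowS IH h. Qed.

Lemma opow_lin (A : V -> V) : islin A -> forall n, islin (opow A n).
Proof. by move=> h; elim=> [//|n IH] a x y; rewrite !opowS IH h. Qed.

Lemma opow_cont (A : V -> V) : continuous A -> forall n, continuous (opow A n).
Proof.
move=> h; elim=> [|n IH] x; first exact: cvg_id.
exact: (continuous_comp (IH x) (h _)).
Qed.

Lemma opow_K (A : V -> V) (K : set V) : (forall k, K k -> K (A k)) ->
  forall n k, K k -> K (opow A n k).
Proof. by move=> h; elim=> [//|n IH] k Kk; rewrite opowS; apply/h/IH. Qed.

Definition Qbb (K : set V) (A : V -> V) (c : C) := 0 < c /\
  forall x k', K k' -> exists k, K k /\ c * `|x - k| <= `|A x - k'|.

Definition subsp (K : set V) := K 0 /\ (forall x y, K x -> K y -> K (x - y)).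

Lemma powQ K M c : Qbb K M c -> forall n, Qbb K (opow M n) (c ^+ n).
Proof.
move=> [c0 hM]; elim=> [|n [cn IH]].
  by split => // x k' Kk'; exists k'; split => //; rewrite expr0 mul1r.
split; first by rewrite exprS mulr_gt0.
move=> x k' Kk'; have [k1 [Kk1 h1]] := hM (opow M n x) k' Kk'.
have [k [Kk h]] := IH x k1 Kk1; exists k; split => //.
rewrite exprS -mulrA opowS; apply: le_trans h1.
by rewrite ler_pM2l.
Qed.

Lemma kerQ K A c : Qbb K A c -> K 0 -> forall x, A x = 0 -> K x.
Proof.
move=> [c0 h] K0 x Ax; have [k [Kk hk]] := h x 0 K0.
move: hk; rewrite Ax subr0 normr0 pmulr_rle0 // normr_le0 subr_eq0.
by move=> /eqP ->.
Qed.
Lemma closedQ K A c : islin A -> continuous A -> Qbb K A c ->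
  (forall k, K k -> A k = 0) -> K 0 -> closed (range A).
Proof.
move=> hA cA [c0 hQ] AK K0 y cly.
have h2 : (0 : C) < 2^-1 by rewrite invr_gt0 ltr0n.
have fx : forall j : nat, exists x, `|y - A x| < (2^-1) ^+ j.
  move=> j; have [z [[x _ <-] hz]] := closure_mem _ _ cly _ (exprn_gt0 j h2).
  by exists x.
have [f Pf] := choice fx.
have gx : forall j : nat, exists k, K k /\
    c * `|(f j.+1 - f j) - k| <= `|A (f j.+1 - f j) - 0| by move=> j; exact: hQ.
have [g Pg] := choice gx.
pose fix z j := if j is i.+1 then z i + (f i.+1 - f i - g i) else f 0%N.
have Az j : A (z j) = A (f j).
  elim: j => [//|j IH] /=.
  rewrite (linD _ hA) IH !(linB _ hA) (AK _ (Pg j).1) subr0.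
  by rewrite addrC subrK.
have [L [L0 hL]] := linbound _ hA cA.
pose rr j := 4 / c * (2^-1) ^+ j.
have hr1 : forall j, rr j.+1 <= rr j / 2.
  by move=> j; rewrite /rr exprSr mulrA.
have hr2 : forall j, `|z j.+1 - z j| <= rr j / 2.
  move=> j /=; rewrite addrAC subrr add0r.
  have [_ hg] := Pg j; rewrite subr0 in hg.
  have hd : `|A (f j.+1 - f j)| <= (2^-1) ^+ j + (2^-1) ^+ j.
    rewrite (linB _ hA) -(subrKA y) addrC.
    apply: le_trans (ler_normD _ _) _; rewrite distrC.
    apply: lerD; first by rewrite distrC; exact: ltW (Pf j).
    rewrite distrC; apply: le_trans (ltW (Pf j.+1)) _.
    by rewrite exprSr ger_pMr ?exprn_gt0 // invf_le1 // ler1n.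
  rewrite -(ler_pM2l c0); apply: le_trans hg _; apply: le_trans hd _.
  by rewrite /rr le_eqVlt; apply/orP; left; apply/eqP; field; rewrite gt_eqF.
have [l hl] := @geo_lim _ _ z rr hr1 hr2.
exists l => //.
apply/eqP; rewrite -subr_eq0; apply/eqP.
apply: (@geo_zero _ (L * (4 / c) + 1)) => j.
have -> : A l - y = A (l - z j) - (y - A (z j)).
  by rewrite (linB _ hA) opprB addrA subrK.
apply: le_trans (ler_normB _ _) _.
rewrite mulrDl mul1r; apply: lerD; last by rewrite Az; exact: ltW (Pf j).
by apply: le_trans (hL _) _; rewrite -mulrA ler_pM2l //; have := hl j; rewrite /rr.
Qed.
Lemma swapV (a b c d : V) : a - b - (c - d) = a - c - (b - d).
Proof. by rewrite !opprB !addrA [LHS]addrAC (addrAC a) [RHS]addrAC. Qed.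

Lemma perturbQ K (S N M : V -> V) k0 c : subsp K -> islin N -> continuous N ->
  (forall k, K k -> K (N k)) -> (forall x, opow N k0 x = 0) ->
  (forall x, M (N x) = N (M x)) -> (forall x, M x = S x + N x) ->
  Qbb K S c -> exists c', Qbb K M c'.
Proof.
move=> [K0 subK] hN cN NK hN0 hMN hM [c0 hQ].
have hMS y : S y = M y - N y by rewrite hM addrK.
have cm := opow_comm N M (fun y => esym (hMN y)).
have Pj : forall j, (j <= k0)%N -> exists D : C, 0 <= D /\ forall x k', K k' ->
    exists k, K k /\ `|opow N (k0 - j) x - k| <= D * `|M x - k'|.
  elim=> [_|j IH hj].
    exists 0; split => // x k' Kk'; exists 0; split => //.
    by rewrite subn0 hN0 subr0 normr0 mul0r.
  have [D [D0 hD]] := IH (ltnW hj).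
  set i := (k0 - j.+1)%N.
  have ei : (k0 - j = i.+1)%N by rewrite /i subnSK.
  have [Li [Li0 hLi]] := linbound _ (opow_lin _ hN i) (opow_cont _ cN i).
  exists ((Li + D) / c); split.
    by apply: divr_ge0; [exact: addr_ge0 (ltW Li0) D0 | exact: ltW c0].
  move=> x k' Kk'; have [k1 [Kk1 h1]] := hD x k' Kk'; rewrite ei in h1.
  have Kk'' : K (opow N i k' - k1) := subK _ _ (opow_K _ _ NK i _ Kk') Kk1.
  have [k [Kk hk]] := hQ (opow N i x) _ Kk''.
  exists k; split => //.
  have eS : S (opow N i x) - (opow N i k' - k1) =
      opow N i (M x - k') - (opow N i.+1 x - k1).
    by rewrite hMS -cm (linB _ (opow_lin _ hN i)) opowS swapV.
  move: hk; rewrite eS => hk.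
  have : c * `|opow N i x - k| <= (Li + D) * `|M x - k'|.
    apply: (le_trans hk); apply: le_trans (ler_normB _ _) _.
    rewrite mulrDl; apply: lerD => //; exact: hLi.
  move=> hh; rewrite -(ler_pM2l c0).
  have -> : c * ((Li + D) / c * `|M x - k'|) = (Li + D) * `|M x - k'|.
    by field; rewrite gt_eqF.
  exact: hh.
have [D [D0 hD]] := Pj k0 (leqnn _); rewrite subnn in hD.
have D1 : 0 < D + 1 := ltr_wpDl D0 ltr01.
exists (D + 1)^-1; split; first by rewrite invr_gt0.
move=> x k' Kk'; have [k [Kk hk]] := hD x k' Kk'; exists k; split => //.
rewrite ler_pdivrMl //; apply: (le_trans hk).
by rewrite ler_wpM2r // lerDl.
Qed.
Lemma opowSr (A : V -> V) n x : opow A n.+1 x = opow A n (A x).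
Proof. exact: iterSr. Qed.
Lemma min_ex (P : nat -> Prop) n : P n -> exists q, P q /\ forall m, (m < q)%N -> ~ P m.
Proof.
elim/ltn_ind: n => n IH Pn.
case: (pselect (exists m, (m < n)%N /\ P m)) => [[m [mn Pm]]|H].
  exact: IH m mn Pm.
by exists n; split => // m mn Pm; apply: H; exists m.
Qed.

Lemma nil_ker (S N M : V -> V) : islin S -> islin N -> islin M ->
  (forall x, S (N x) = N (S x)) -> (forall x, M x = S x + N x) ->
  forall n a b x, (a + b = n)%N -> opow S a x = 0 -> opow N b x = 0 -> opow M n x = 0.
Proof.
move=> hS hN hM cSN eM; elim=> [|n IH] a b x.
  by case: a => // -[] //= _ ->.
case: a => [|a].
  move=> _ hx _; have -> : x = 0 := hx; exact: (lin0 _ (opow_lin _ hM n.+1)).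
case: b => [|b].
  move=> _ _ hx; have -> : x = 0 := hx; exact: (lin0 _ (opow_lin _ hM n.+1)).
rewrite addSn => -[eab] hSx hNx.
rewrite opowSr eM (linD _ (opow_lin _ hM _)).
have e1 : opow M n (S x) = 0.
  apply: (IH a b.+1 (S x) eab); first by rewrite -opowSr; exact: hSx.
  by rewrite (opow_comm N S (fun y => esym (cSN y))) hNx (lin0 _ hS).
have e2 : opow M n (N x) = 0.
  apply: (IH a.+1 b (N x)); first by rewrite addSn -addnS.
    by rewrite (opow_comm S N cSN) hSx (lin0 _ hN).
  rewrite -opowSr; exact: hNx.
by rewrite e1 e2 addr0.
Qed.
Definition BB (A : V -> V) := exists c : R, 0 < c /\ forall x : V, ((c%:C)%C * `|x| <= `|A x|).

Lemma Mlin (S N M : V -> V) : islin S -> islin N -> (forall x, M x = S x + N x) -> islin M.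
Proof.
move=> hS hN eM a x y; rewrite !eM hS hN scalerDr.
by rewrite -!addrA; congr (_ + _); rewrite addrCA.
Qed.

Lemma Mcomm (S N M : V -> V) : islin N -> (forall x, S (N x) = N (S x)) ->
  (forall x, M x = S x + N x) -> forall x, M (N x) = N (M x).
Proof. by move=> hN cSN eM x; rewrite !eM cSN (linD _ hN). Qed.

Lemma mainBB (S N M : V -> V) : bounded_op S -> bounded_op N -> nilpotent N ->
  (forall x, S (N x) = N (S x)) -> (forall x, M x = S x + N x) -> BB S -> BB M.
Proof.
move=> [hS cS] [hN cN] [k0 hk0] cSN eM [c [c0 hc]].
pose K := fun v : V => v = 0.
have sK : subsp K by split => // x y -> ->; rewrite subr0.
have NK : forall k, K k -> K (N k) by move=> k ->; rewrite /K (lin0 _ hN).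
have QS : Qbb K S (c%:C)%C.
  split; first by rewrite ltcR.
  by move=> x k' ->; exists 0; split => //; rewrite !subr0.
have [c' [c'0 hc']] := perturbQ _ _ _ _ _ _ sK hN cN NK hk0 (Mcomm _ _ _ hN cSN eM) eM QS.
have [e1 e2] := posC c'0.
exists (complex.Re c'); split => // x.
have [k [-> hk]] := hc' x 0 erefl.
by move: hk; rewrite !subr0 -e1.
Qed.
Lemma stab (M : V -> V) q : islin M -> Defs.kernel (opow M q) = Defs.kernel (opow M q.+1) ->
  forall d x, opow M (q + d) x = 0 -> opow M q x = 0.
Proof.
move=> hM hk; elim=> [|d IH] x; first by rewrite addn0.
rewrite addnS opowSr => /IH h.
have : Defs.kernel (opow M q.+1) x by change (opow M q.+1 x = 0); rewrite opowSr.
by rewrite -hk.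
Qed.

Lemma mainLD (S N M : V -> V) : bounded_op S -> bounded_op N -> nilpotent N ->
  (forall x, S (N x) = N (S x)) -> (forall x, M x = S x + N x) ->
  left_drazin_invertible S -> left_drazin_invertible M.
Proof.
move=> [hS cS] [hN cN] [k0 hk0] cSN eM [p [[hker _] hcl]].
have hM := Mlin _ _ _ hS hN eM.
have cM : continuous M.
  have -> : M = (fun x => S x + N x) by apply/funext => x; exact: eM.
  move=> x; exact: cvgD (cS x) (cN x).
pose K := Defs.kernel (opow S p).
have hSp := opow_lin _ hS p.
have hSp1 := opow_lin _ hS p.+1.
have sK : subsp K.
  split; first exact: (lin0 _ hSp).
  move=> x y hx hy; have hx' : opow S p x = 0 := hx; have hy' : opow S p y = 0 := hy.
  by change (opow S p (x - y) = 0); rewrite (linB _ hSp) hx' hy' subr0.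
have NK : forall k, K k -> K (N k).
  move=> k hk; have hk' : opow S p k = 0 := hk.
  by change (opow S p (N k) = 0); rewrite (opow_comm S N cSN) hk' (lin0 _ hN).
have K1 : forall x, opow S p.+1 x = 0 -> K x.
  by move=> x h; change (Defs.kernel (opow S p) x); rewrite hker.
have [D [D0 hD]] := openmap _ hSp1 (opow_cont _ cS p.+1) hcl.
have [L [L0 hL]] := linbound _ hSp (opow_cont _ cS p).
have QS : Qbb K S (D * L)^-1.
  split; first by rewrite invr_gt0 mulr_gt0.
  move=> x k' Kk'; have Kk'' : opow S p k' = 0 := Kk'.
  have [x' [ex' hx']] := hD x.
  exists (x - x'); split.
    by apply: K1; rewrite (linB _ hSp1) ex' subrr.
  have -> : x - (x - x') = x' by rewrite opprB addrC subrK.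
  have hA : `|opow S p.+1 x| <= L * `|S x - k'|.
    have -> : opow S p.+1 x = opow S p (S x - k') by rewrite (linB _ hSp) Kk'' subr0 opowSr.
    exact: hL.
  rewrite ler_pdivrMl ?mulr_gt0 //; apply: le_trans hx' _.
  by rewrite -mulrA ler_pM2l.
have [c' QM] := perturbQ _ _ _ _ _ _ sK hN cN NK hk0 (Mcomm _ _ _ hN cSN eM) eM QS.
have Mn : forall k, K k -> opow M (p + k0) k = 0.
  by move=> k hk; apply: (nil_ker _ _ _ hS hN hM cSN eM (p + k0) p k0 k).
have ker_sub : forall n x, opow M n x = 0 -> K x.
  by move=> n x h; exact: (kerQ _ _ _ (powQ _ _ _ QM n) sK.1 x h).
have Pm : Defs.kernel (opow M (p + k0)) = Defs.kernel (opow M (p + k0).+1).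
  apply/seteqP; split => x h.
    have h' : opow M (p + k0) x = 0 := h.
    by change (opow M (p + k0).+1 x = 0); rewrite opowS h' (lin0 _ hM).
  exact: Mn _ (ker_sub _ _ h).
have [q [Pq qmin]] := min_ex (fun m => Defs.kernel (opow M m) = Defs.kernel (opow M m.+1)) _ Pm.
exists q; split; first by split.
have AK : forall k, K k -> opow M q.+1 k = 0.
  move=> k hk; rewrite opowS (stab _ _ hM Pq (p + k0) k) ?(lin0 _ hM) //.
  by rewrite /opow iterD; have := Mn k hk; rewrite /opow => ->; exact: (lin0 _ (opow_lin _ hM q)).
exact: (closedQ _ _ _ (opow_lin _ hM q.+1) (opow_cont _ cM q.+1) (powQ _ _ _ QM q.+1) AK sK.1).
Qed.
Lemma bnd_add (A B : V -> V) : bounded_op A -> bounded_op B -> bounded_op (fun x => A x + B x).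
Proof.
move=> [hA cA] [hB cB]; split; first exact: (Mlin _ _ (fun x => A x + B x) hA hB).
by move=> x; exact: cvgD (cA x) (cB x).
Qed.

Lemma bnd_opp (A : V -> V) : bounded_op A -> bounded_op (fun x => - A x).
Proof.
move=> [hA cA]; split.
  by move=> a x y /=; rewrite hA opprD scalerN.
by move=> x; exact: cvgN (cA x).
Qed.

Lemma bnd_shift (A : V -> V) l : bounded_op A -> bounded_op (Defs.shift A l).
Proof.
move=> [hA cA]; split.
  move=> a x y; rewrite /Defs.shift hA scalerDr scalerBr !scalerA [l * a]mulrC opprD.
  by rewrite addrACA.
by move=> x; exact: cvgB (cA x) (cvgZr cvg_id).
Qed.

Lemma opow_opp (A : V -> V) : islin A -> forall n x,
  opow (fun y => - A y) n x = ((-1) ^+ n) *: opow A n x.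
Proof.
move=> hA; elim=> [|n IH] x; first by rewrite expr0 scale1r.
by rewrite !opowS IH (linZ _ hA) exprS -scalerA scaleN1r.
Qed.

Lemma nil_opp (A : V -> V) : islin A -> nilpotent A -> nilpotent (fun x => - A x).
Proof. by move=> hA [k hk]; exists k => x; rewrite opow_opp // hk scaler0. Qed.

Lemma lp_transfer (T N T' : V -> V) : bounded_op T -> bounded_op N -> nilpotent N ->
  (forall x, T (N x) = N (T x)) -> (forall x, T' x = T x + N x) ->
  left_poles T `<=` left_poles T'.
Proof.
move=> bT bN nN cTN eT' l [hsp hld].
have [hN cN] := bN.
have eM : forall x, Defs.shift T' l x = Defs.shift T l x + N x.
  by move=> x; rewrite /Defs.shift eT' addrAC.
have bS := bnd_shift T l bT.
have cSN : forall x, Defs.shift T l (N x) = N (Defs.shift T l x).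
  by move=> x; rewrite /Defs.shift cTN (linB _ hN) (linZ _ hN).
split; last exact: (mainLD _ _ _ bS bN nN cSN eM).
move=> hBB; apply: hsp.
have bM : bounded_op (Defs.shift T' l).
  have -> : Defs.shift T' l = (fun x => Defs.shift T l x + N x) by apply/funext => x; exact: eM.
  exact: bnd_add.
apply: (mainBB (Defs.shift T' l) (fun x => - N x) (Defs.shift T l) bM (bnd_opp _ bN)
   (nil_opp _ hN nN)) => //.
- by move=> x; rewrite (linN _ bM.1) (Mcomm _ _ _ hN cSN eM).
- by move=> x; rewrite eM addrK.
Qed.
End Main.

Theorem corollary3p9 (R : realType) (V : completeNormedModType (R[i])%C)
  (T N : V -> V) :
  infinite_dim V -> bounded_op T -> bounded_op N -> nilpotent N ->
  (forall x, T (N x) = N (T x)) ->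
  left_poles (fun x => T x + N x) = left_poles T.
Proof.
move=> _ bT bN nN cTN.
have hN := bN.1; have hT := bT.1.
apply/seteqP; split.
  apply: (@lp_transfer R V (fun x => T x + N x) (fun x => - N x) T
    (@bnd_add R V _ _ bT bN) (@bnd_opp R V _ bN) (@nil_opp R V _ hN nN)).
    move=> x /=; rewrite (@linN R V _ hT) (@linN R V _ hN) cTN.
    by rewrite (@linD R V _ hN) opprD.
  by move=> x; rewrite addrK.
exact: (@lp_transfer R V T N (fun x => T x + N x) bT bN nN cTN (fun x => erefl)).
Qed.
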